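(* The set of points of exact period $4$ under $G$ lies on the curve \[ u^{2}(-v^{2}+v)+u(v^{3}-v^{2}-v+1)+v^{3}+v^{2}=0, \] and the Zariski closure in $\mathbb{C}^2$ of this set is this curve (this is the equation of period four orbits on the $(u,v)$-plane).
   Context: Let \[ G(u,v)=\left(\frac{-u+v+uv}{u},\ \frac{u^{2}-u+v-u^{2}v-uv+uv^{2}+v^{2}}{u}\right), \] defined for $(u,v)\in\mathbb{C}^2$ with $u\neq 0$. A point $(u,v)$ has exact period $n$ under $G$ if the iterates $G^k(u,v)$, $0\le k\le n-1$, all have nonzero first coordinate, $G^n(u,v)=(u,v)$, and $G^k(u,v)\neq(u,v)$ for $0<k<n$. *)

(* Defs.v *)
From HB Require Import structures.
From mathcomp Require Import all_boot all_order all_algebra.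
From mathcomp Require Import reals complex.
Set Implicit Arguments. Unset Strict Implicit. Unset Printing Implicit Defensive.
Import Order.TTheory GRing.Theory Num.Theory.
Local Open Scope ring_scope.

Section Defs.
Variable R : realType.
Local Notation C := (R[i]).

(* The map G, written with field division (u = 0 gives a junk value,
   but the period definition requires nonzero first coordinates). *)
Definition Gmap (p : C * C) : C * C :=
  let: (u, v) := p in
  ((- u + v + u * v) / u,
   (u ^+ 2 - u + v - u ^+ 2 * v - u * v + u * v ^+ 2 + v ^+ 2) / u).

Definition exact_period (n : nat) (p : C * C) : Prop :=
  (forall k, (k < n)%N -> (iter k Gmap p).1 != 0) /\
  iter n Gmap p = p /\
  (forall k, (0 < k < n)%N -> iter k Gmap p != p).

Definition period4_poly (u v : C) : C :=
  u ^+ 2 * (- v ^+ 2 + v) + u * (v ^+ 3 - v ^+ 2 - v + 1) + v ^+ 3 + v ^+ 2.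

Definition period4_curve (p : C * C) : Prop := period4_poly p.1 p.2 = 0.

(* evaluation of a bivariate polynomial f(u,v) in {poly {poly C}}:
   inner variable u, outer variable v *)
Definition eval2 (f : {poly {poly C}}) (p : C * C) : C :=
  (f.[p.2%:P]).[p.1].

Definition zariski_closure (S : C * C -> Prop) (p : C * C) : Prop :=
  forall f : {poly {poly C}}, (forall q, S q -> eval2 f q = 0) -> eval2 f p = 0.
End Defs.

(* Main.v *)
Require Import Defs.
From HB Require Import structures.
From mathcomp Require Import all_boot all_order all_algebra.
From mathcomp Require Import reals complex.
From mathcomp Require Import ring.
Set Implicit Arguments. Unset Strict Implicit. Unset Printing Implicit Defensive.
Import Order.TTheory GRing.Theory Num.Theory.
Local Open Scope ring_scope.

Section Aux.
Variable R : realType.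
Local Notation C := (R[i]).

Definition Qas (a s : C) : C :=
  (a-1)^+3*(1+s)^+2*s + (a-1)^+2*(1+s)*((1+s)^+2 - (1+s) + 1) + (a-1)*(1+s)*s + 1.
Definition al1 (a s : C) : C := (1%:R).
Definition be1 (a s : C) : C := (1%:R - s^+2 - a + a*s + 2%:R*a*s^+2 - a^+2*s - a^+2*s^+2).
Definition al2 (a s : C) : C := (a + a^+2*s).
Definition be2 (a s : C) : C := (- 1%:R + a - a^+2 + a^+2*s + a^+2*s^+2 - a^+3*s - a^+3*s^+2).
Definition al3 (a s : C) : C := (a + a*s - a^+2*s - a^+2*s^+2 + a^+3*s + a^+3*s^+2).
Definition be3 (a s : C) : C := (- 1%:R + a + a*s - a^+2 - a^+2*s).
Definition alp (a s : C) : C := (2%:R*a + a^+2*s).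
Definition bep (a s : C) : C := (- 2%:R + 4%:R*a + a*s - 3%:R*a^+2 + a^+2*s^+2 - a^+3*s - a^+3*s^+2).
Definition H1 (a s : C) : C := (- a*s^+2 + a^+2*s + 2%:R*a^+2*s^+2 - a^+2*s^+4 - 2%:R*a^+3*s^+2 + 3%:R*a^+3*s^+4 + a^+3*s^+5 + a^+4*s^+2 - a^+4*s^+3 - 4%:R*a^+4*s^+4 - 2%:R*a^+4*s^+5 + a^+5*s^+3 + 2%:R*a^+5*s^+4 + a^+5*s^+5).
Definition H2 (a s : C) : C := (- 2%:R*a*s - a*s^+2 + a^+2*s + 2%:R*a^+2*s^+2 - a^+2*s^+4 - 2%:R*a^+3*s^+2 + 3%:R*a^+3*s^+4 + a^+3*s^+5 + a^+4*s^+2 - a^+4*s^+3 - 4%:R*a^+4*s^+4 - 2%:R*a^+4*s^+5 + a^+5*s^+3 + 2%:R*a^+5*s^+4 + a^+5*s^+5).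
Definition Dsc (u : C) : C := (4%:R*u + 36%:R*u^+2 + 68%:R*u^+3 + 51%:R*u^+4 + 31%:R*u^+5 + 18%:R*u^+6 + 2%:R*u^+7 - u^+8 - u^+9).
Definition Pv (u v : C) : C := (2%:R*v + 3%:R*v^+2 - u - 2%:R*u*v + 3%:R*u*v^+2 + u^+2 - 2%:R*u^+2*v).
Definition ald (u v : C) : C := (4%:R + 14%:R*v + 12%:R*v^+2 + 30%:R*u + 6%:R*u*v + 6%:R*u*v^+2 + 75%:R*u^+2 + 4%:R*u^+2*v - 12%:R*u^+2*v^+2 + 56%:R*u^+3 - 4%:R*u^+3*v - 6%:R*u^+3*v^+2 + 30%:R*u^+4 - 4%:R*u^+4*v + 6%:R*u^+4*v^+2 + 16%:R*u^+5 + 2%:R*u^+5*v + 6%:R*u^+5*v^+2 + u^+6 + 2%:R*u^+6*v - 4%:R*u^+7).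
Definition bed (u v : C) : C := (- 2%:R*v - 6%:R*v^+2 - 4%:R*v^+3 - 6%:R*u - 8%:R*u*v - 2%:R*u*v^+3 + u^+2 - 27%:R*u^+2*v + 4%:R*u^+2*v^+3 + 6%:R*u^+3 - 16%:R*u^+3*v + 2%:R*u^+3*v^+3 + 5%:R*u^+4 - 10%:R*u^+4*v - 2%:R*u^+4*v^+3 + 3%:R*u^+5 - 6%:R*u^+5*v - 2%:R*u^+5*v^+3 + 2%:R*u^+6 - u^+6*v - u^+7 + 2%:R*u^+7*v).

Definition pt (x : C * C) : C * C := (x.1 - 1, (x.1 - 1) * (1 + x.2)).
Definition Fm (x : C * C) : C * C := (x.1 * (1 + x.2), (x.1 - 1) * x.2).

Lemma Gpt x : x.1 - 1 != 0 -> Gmap (pt x) = pt (Fm x).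
Proof.
case: x => a s /= h; rewrite /Gmap /pt /Fm /=.
congr (_, _); field; exact: h.
Qed.

Lemma pt_inj x y : x.1 - 1 != 0 -> pt x = pt y -> x = y.
Proof.
case: x => a s; case: y => b t /= h [e1 e2].
have eab : a = b by move/eqP: e1; rewrite (can_eq (subrK 1)) => /eqP.
subst b; congr (_, _).
by move/(mulfI h)/eqP: e2; rewrite (can_eq (addKr 1)) => /eqP.
Qed.

Lemma iter_pt k x : (forall j, (j < k)%N -> (iter j Fm x).1 - 1 != 0) ->
  iter k (@Gmap R) (pt x) = pt (iter k Fm x).
Proof.
elim: k => [//|k IH] H /=.
rewrite IH; last by move=> j hj; apply: H; exact: ltnW.
by rewrite Gpt //; apply: H.
Qed.

Lemma P_Q u s : period4_poly u (u * (1 + s)) = u * Qas (u + 1) s.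
Proof. rewrite /period4_poly /Qas; ring. Qed.

Lemma pt_of (u v : C) : u != 0 -> (u, v) = pt (u + 1, v / u - 1).
Proof. move=> hu; rewrite /pt /=; congr (_, _); first ring. field. by []. Qed.


Lemma E1id a s : (iter 4 Fm (a,s)).1 - a = Qas a s * H1 a s.
Proof. rewrite /= /Qas /H1; ring. Qed.
Lemma E2id a s : (iter 4 Fm (a,s)).2 - s = Qas a s * H2 a s.
Proof. rewrite /= /Qas /H2; ring. Qed.
Lemma c1id a s : Qas a s * al1 a s + be1 a s * ((iter 1 Fm (a,s)).1 - 1) = 1.
Proof. rewrite /= /Qas /al1 /be1; ring. Qed.
Lemma c2id a s : Qas a s * al2 a s + be2 a s * ((iter 2 Fm (a,s)).1 - 1) = 1.
Proof. rewrite /= /Qas /al2 /be2; ring. Qed.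
Lemma c3id a s : Qas a s * al3 a s + be3 a s * ((iter 3 Fm (a,s)).1 - 1) = 1.
Proof. rewrite /= /Qas /al3 /be3; ring. Qed.
Lemma cpid a s : Qas a s * alp a s + bep a s * ((iter 2 Fm (a,s)).1 - a) = 2 * a * ((a-1)^+2+1).
Proof. rewrite /= /Qas /alp /bep; ring. Qed.
Lemma Q0id a : Qas a 0 = (a-1)^+2+1.
Proof. rewrite /Qas; ring. Qed.
Lemma H12 a s : H1 a s - H2 a s = 2 * a * s.
Proof. rewrite /H1 /H2; ring. Qed.
Lemma discid u v : ald u v * period4_poly u v + bed u v * Pv u v = Dsc u.
Proof. rewrite /ald /bed /period4_poly /Pv /Dsc; ring. Qed.
Lemma lagr u z : 6 * Pv u z = - period4_poly u (z+2) + 6 * period4_poly u (z+1)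
   - 3 * period4_poly u z - 2 * period4_poly u (z-1).
Proof. rewrite /Pv /period4_poly; ring. Qed.


Lemma nzF k x : (forall j, (j < k)%N -> (iter j (@Gmap R) (pt x)).1 != 0) ->
  forall j, (j < k)%N -> (iter j Fm x).1 - 1 != 0.
Proof.
elim: k => [//|k IH] H j; rewrite ltnS leq_eqVlt => /orP [/eqP -> | hj].
- have := H k (ltnSn k); rewrite iter_pt //.
  by move=> i hi; apply: IH => // l hl; apply: H; exact: (ltn_trans hl).
- by apply: IH => // l hl; apply: H; exact: (ltn_trans hl).
Qed.

Lemma two_neq0 : (2 : C) != 0.
Proof. by rewrite pnatr_eq0. Qed.

Lemma part1 (p : C * C) : exact_period 4 p -> period4_curve p.
Proof.
case: p => u v [nz [per nper]].
have hu : u != 0 := nz 0%N isT.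
have ep := pt_of v hu.
set a := u + 1 in ep; set s := v / u - 1 in ep.
rewrite ep in nz per nper.
have hall := nzF nz.
have e4 : (a, s) = iter 4 Fm (a, s).
  apply: pt_inj; first by rewrite /= /a addrK.
  by rewrite -iter_pt.
have ha : a != 0.
  apply/eqP => a0.
  have := nper 2%N isT; rewrite iter_pt; last by move=> j hj; apply: hall; exact: (ltn_trans hj).
  rewrite /= a0; move/eqP; apply; congr (pt (_, _)); rewrite /Fm /=; ring.
have hs : s != 0.
  apply/eqP => s0.
  have := nper 1%N isT; rewrite iter_pt; last by move=> j hj; apply: hall; exact: (ltn_trans hj).
  rewrite /= s0; move/eqP; apply; congr (pt (_, _)); rewrite /Fm /=; ring.
have hQ : Qas a s = 0.
  have h1 : Qas a s * H1 a s = 0 by rewrite -E1id -e4 /= subrr.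
  have h2 : Qas a s * H2 a s = 0 by rewrite -E2id -e4 /= subrr.
  have : Qas a s * (2 * a * s) = 0 by rewrite -H12 mulrBr h1 h2 subrr.
  move/eqP; rewrite !mulf_eq0 (negbTE two_neq0) (negbTE ha) (negbTE hs) /= orbF.
  by move/eqP.
rewrite /period4_curve /=.
have -> : v = u * (1 + s) by rewrite /s; field.
by rewrite P_Q hQ mulr0.
Qed.


Lemma good (u v : C) : u != 0 -> u + 1 != 0 -> u ^+ 2 + 1 != 0 ->
  period4_poly u v = 0 -> exact_period 4 (u, v).
Proof.
move=> hu ha hw hP.
have ep := pt_of v hu.
set a := u + 1 in ep ha; set s := v / u - 1 in ep.
have am1 : a - 1 = u by rewrite /a addrK.
have hQ : Qas a s = 0.
  have ev : v = u * (1 + s) by rewrite /s; field.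
  by move: hP; rewrite ev P_Q => /eqP; rewrite mulf_eq0 (negbTE hu) /= => /eqP.
have hall : forall j, (j < 4)%N -> (iter j Fm (a, s)).1 - 1 != 0.
  case=> [|[|[|[|j]]]] // _.
  - by rewrite /= am1.
  - apply/eqP => e; have := c1id a s; rewrite e hQ mulr0 mul0r addr0 => /eqP.
    by rewrite eq_sym oner_eq0.
  - apply/eqP => e; have := c2id a s; rewrite e hQ mulr0 mul0r addr0 => /eqP.
    by rewrite eq_sym oner_eq0.
  - apply/eqP => e; have := c3id a s; rewrite e hQ mulr0 mul0r addr0 => /eqP.
    by rewrite eq_sym oner_eq0.
have hit : forall k, (k <= 4)%N -> iter k (@Gmap R) (pt (a, s)) = pt (iter k Fm (a, s)).
  move=> k hk; apply: iter_pt => j hj; apply: hall; exact: (leq_trans hj).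
have e4 : iter 4 Fm (a, s) = (a, s).
  have h1 := E1id a s; have h2 := E2id a s; rewrite hQ !mul0r in h1 h2.
  move: h1 h2; case: (iter 4 Fm (a, s)) => a4 s4 /= /eqP h1 /eqP h2.
  by rewrite subr_eq0 in h1; rewrite subr_eq0 in h2; rewrite (eqP h1) (eqP h2).
have n1 : iter 1 (@Gmap R) (pt (a, s)) != pt (a, s).
  rewrite hit //; apply/eqP => /esym /pt_inj; rewrite /= am1 => /(_ hu) [].
  move=> e1 _; have : a * s = 0.
    by transitivity (a * (1 + s) - a); [ring | rewrite -e1 subrr].
  move/eqP; rewrite mulf_eq0 (negbTE ha) /= => /eqP s0.
  by move: hQ; rewrite s0 Q0id am1 => /eqP; rewrite (negbTE hw).
rewrite ep; split; [|split].
- move=> k hk; rewrite hit; [exact: hall | exact: ltnW].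
- by rewrite hit // e4.
- case=> [|[|[|[|k]]]] // _.
  + rewrite hit //; apply/eqP => /esym /pt_inj e.
    have {e} e : (a, s) = iter 2 Fm (a, s) by apply: e; rewrite /= am1.
    have := cpid a s; rewrite -e /= subrr hQ mul0r mulr0 addr0 => /eqP.
    rewrite eq_sym !mulf_eq0 (negbTE two_neq0) (negbTE ha) am1 (negbTE hw) //.
  + apply/eqP => e3; move/eqP: n1; apply.
    have : iter 4 (@Gmap R) (pt (a, s)) = pt (a, s) by rewrite hit // e4.
    by rewrite iterS e3.
Qed.


Definition dpoly : {poly {poly C}} :=
  Poly [:: 'X; 'X ^+ 2 - 'X; - 'X ^+ 2 - 'X + 1; 'X + 1].

Lemma Xadd1_neq0 : ('X + 1 : {poly C}) != 0.
Proof.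
apply/eqP => h; have := congr1 (horner^~ 0) h; rewrite !hornerE => /eqP.
by rewrite ?add0r oner_eq0.
Qed.

Lemma dpolyE : polyseq dpoly = [:: 'X; 'X ^+ 2 - 'X; - 'X ^+ 2 - 'X + 1; 'X + 1].
Proof. by rewrite /dpoly (@PolyK _ 0) //= Xadd1_neq0. Qed.

Lemma size_d : size dpoly = 4%N.
Proof. by rewrite dpolyE. Qed.

Lemma lead_d : lead_coef dpoly = 'X + 1.
Proof. by rewrite lead_coefE size_d dpolyE. Qed.

Lemma eval2_map (f : {poly {poly C}}) u v :
  eval2 f (u, v) = (map_poly (horner_eval u) f).[v].
Proof.
have E := horner_map (horner_eval u) f v%:P.
have e2 : horner_eval u v%:P = v by exact: hornerC.
transitivity (horner_eval u f.[v%:P]); first by [].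
transitivity ((map_poly (horner_eval u) f).[horner_eval u v%:P]); first exact: (esym E).
by rewrite e2.
Qed.

Lemma horner_rec4 (T : nzRingType) (a b c d x : T) :
  horner_rec [:: a; b; c; d] x = (((0 * x + d) * x + c) * x + b) * x + a.
Proof. by []. Qed.

Lemma eval2_d u v : eval2 dpoly (u, v) = period4_poly u v.
Proof.
rewrite /eval2 /dpoly horner_Poly horner_rec4 /=. rewrite !(hornerD, hornerN, hornerM, hornerX, hornerC, horner_exp, hornerXn, hornerC). rewrite /period4_poly; ring.
Qed.

Lemma poly_all0 (p : {poly C}) : (forall x, p.[x] = 0) -> p = 0.
Proof.
move=> H; apply: (@roots_geq_poly_eq0 _ p [seq i%:R | i <- iota 0 (size p)]).
- by apply/allP => x _; apply/eqP; exact: H.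
- rewrite map_inj_uniq ?iota_uniq // => m n /eqP; rewrite eqr_nat => /eqP.
  done.
- by rewrite size_map size_iota.
Qed.


Lemma six_neq0 : (6 : C) != 0.
Proof. by rewrite pnatr_eq0. Qed.

Lemma dbl u0 c z w :
  (forall v, period4_poly u0 v = c * ((v - z) * ((v - z) * (v - w)))) -> Dsc u0 = 0.
Proof.
move=> H.
have hz : period4_poly u0 z = 0 by rewrite H subrr mul0r mulr0.
have hv : Pv u0 z = 0.
  have E := lagr u0 z; rewrite !H in E.
  have : 6 * Pv u0 z = 0 by rewrite E; ring.
  by move/eqP; rewrite mulf_eq0 (negbTE six_neq0) /= => /eqP.
by rewrite -(discid u0 z) hz hv !mulr0 addr0.
Qed.

Lemma cancelX k (g q : {poly {poly C}}) :
  ('X + 1) ^+ k *: g = q * dpoly -> exists q', g = q' * dpoly.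
Proof.
elim: k g q => [|k IH] g q; first by rewrite expr0 scale1r => ->; exists q.
move=> H.
pose ev := map_poly (horner_eval (-1 : C)).
have evd : ev dpoly != 0.
  apply/eqP => e; have := eval2_d (-1) 0; rewrite eval2_map -/ev e horner0.
  have -> : period4_poly (-1 : C) 0 = -1 by rewrite /period4_poly; ring.
  by move/eqP; rewrite eq_sym oppr_eq0 oner_eq0.
have evq : ev q = 0.
  have := congr1 ev H; rewrite /ev -mul_polyC rmorphM /= map_polyC /=.
  have -> : horner_eval (-1 : C) (('X + 1) ^+ k.+1) = 0.
    by rewrite horner_evalE horner_exp !hornerE addNr expr0n.
  rewrite mul0r rmorphM /= => /esym /eqP; rewrite mulf_eq0 (negbTE evd) orbF.
  by move/eqP.
have hq : forall i, ('X + 1) %| q`_i.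
  move=> i; have := congr1 (fun p : {poly C} => p`_i) evq; rewrite /ev coef_map coef0 => E.
  have -> : ('X + 1 : {poly C}) = 'X - (-1)%:P by rewrite polyCN opprK.
  by rewrite dvdp_XsubCl /root; apply/eqP; exact: E.
pose q1 := map_poly (fun c => c %/ ('X + 1)) q.
have eq1 : q = ('X + 1)%:P * q1.
  by apply/polyP => i; rewrite coefCM coef_map_id0 ?div0p // mulrC divpK.
apply: (IH g q1).
apply: (@mulfI _ ('X + 1)%:P); first by rewrite polyC_eq0 Xadd1_neq0.
by rewrite mulrA -eq1 -H mul_polyC scalerA -exprS.
Qed.


Definition DscP : {poly C} :=
  'X * ((4%:R)%:P + 'X * ((36%:R)%:P + 'X * ((68%:R)%:P + 'X * ((51%:R)%:P +
  'X * ((31%:R)%:P + 'X * ((18%:R)%:P + 'X * ((2%:R)%:P + 'X * (- 1 - 'X)))))))).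

Definition Dall : {poly C} := 'X * ('X + 1) * ('X ^+ 2 + 1) * DscP.

Lemma DallE x : Dall.[x] = x * (x + 1) * (x ^+ 2 + 1) * Dsc x.
Proof.
rewrite /Dall /DscP /Dsc.
rewrite !(hornerD, hornerN, hornerM, hornerX, hornerC, horner_exp).
ring.
Qed.

Lemma Dall_neq0 : Dall != 0.
Proof.
apply/eqP => e; have := DallE 1; rewrite e horner0.
have -> : (1 : C) * (1 + 1) * (1 ^+ 2 + 1) * Dsc 1 = 832%:R by rewrite /Dsc; ring.
by move/eqP; rewrite eq_sym pnatr_eq0.
Qed.


Lemma part2 (f : {poly {poly C}}) :
  (forall q, exact_period 4 q -> eval2 f q = 0) ->
  forall u v, period4_poly u v = 0 -> eval2 f (u, v) = 0.
Proof.
move=> Hf u v huv.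
have dn0 : dpoly != 0 by rewrite -size_poly_eq0 size_d.
have hdiv := Pdiv.Idomain.divp_eq f dpoly.
set k := scalp f dpoly in hdiv.
set qd := Pdiv.Idomain.divp f dpoly in hdiv.
set r := Pdiv.Idomain.modp f dpoly in hdiv.
have szr : (size r < 4)%N by rewrite -size_d Pdiv.Idomain.ltn_modp.
have rm0 : forall u0, u0 != 0 -> u0 + 1 != 0 -> u0 ^+ 2 + 1 != 0 -> Dsc u0 != 0 ->
    map_poly (horner_eval u0) r = 0.
  move=> u0 h0 h1 h2 h3.
  set dm := map_poly (horner_eval u0) dpoly.
  have dmE : forall z, dm.[z] = period4_poly u0 z.
    by move=> z; rewrite -eval2_d eval2_map.
  have lcd : horner_eval u0 (lead_coef dpoly) = u0 + 1.
    by rewrite lead_d horner_evalE hornerD hornerX hornerC.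
  have szdm : size dm = 4%N by rewrite size_map_poly_id0 ?lcd // size_d.
  have lcdm : lead_coef dm = u0 + 1.
    by rewrite lead_coef_map_id0 ?lcd // horner_evalE horner0.
  have [rs Hrs] := closed_field_poly_normal dm.
  have szrs : size rs = 3%N.
    have := congr1 (fun p : {poly C} => size p) Hrs; rewrite /= size_scale ?lcdm // size_prod_XsubC szdm.
    by case.
  have hev : forall x, dm.[x] = (u0 + 1) * \prod_(z <- rs) (x - z).
    move=> x; rewrite {1}Hrs hornerZ horner_prod lcdm; congr (_ * _).
    by apply: eq_bigr => z _; rewrite hornerXsubC.
  have roots : forall z, z \in rs -> period4_poly u0 z = 0.
    by move=> z hz; rewrite -dmE hev (big_rem z hz) /= subrr mul0r mulr0.
  have urs : uniq rs.
    have D : forall a c, (forall x, period4_poly u0 x = (u0 + 1) * ((x - a) * ((x - a) * (x - c)))) -> False.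
      by move=> a c H; move/eqP: h3; apply; exact: (dbl H).
    move: szrs hev; case: rs {Hrs roots} => [|z1 [|z2 [|z3 [|]]]] //= _ hev.
    rewrite !inE !negb_or andbT -andbA; apply/and3P; split; apply/eqP => e.
    - by apply: (D z1 z3) => x; rewrite -dmE hev !big_cons big_nil -e; ring.
    - by apply: (D z1 z2) => x; rewrite -dmE hev !big_cons big_nil -e; ring.
    - by apply: (D z2 z1) => x; rewrite -dmE hev !big_cons big_nil -e; ring.
  have rmz : forall z, z \in rs -> (map_poly (horner_eval u0) r).[z] = 0.
    move=> z hz.
    have fz := Hf _ (good h0 h1 h2 (roots z hz)).
    have := congr1 (fun g => eval2 g (u0, z)) hdiv.
    rewrite /= !eval2_map -mul_polyC !rmorphM rmorphD /= map_polyC /=.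
    rewrite hornerD rmorphM !hornerM hornerC -!eval2_map fz eval2_d (roots z hz).
    by rewrite !mulr0 add0r => <-.
  apply: (roots_geq_poly_eq0 (rs := rs)) => //.
  - by apply/allP => z hz; rewrite /root rmz.
  - rewrite szrs; apply: (leq_trans (size_poly _ _)); by rewrite -ltnS.
have rc0 : forall i, r`_i = 0.
  move=> i.
  have : r`_i * Dall = 0.
    apply: poly_all0 => x; rewrite hornerM DallE.
    have [/and4P [h0 h1 h2 h3]| ng] :=
      boolP [&& x != 0, x + 1 != 0, x ^+ 2 + 1 != 0 & Dsc x != 0].
    - have := congr1 (fun p : {poly C} => p`_i) (rm0 x h0 h1 h2 h3).
      rewrite coef_map coef0 /= => E.
      have E' : (r`_i).[x] = 0 by exact: E.
      by rewrite E' mul0r.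
    - move: ng; rewrite !negb_and !negbK => /or4P [] /eqP ->;
      by rewrite ?(mulr0, mul0r).
  move/eqP; rewrite mulf_eq0 (negbTE Dall_neq0) orbF => /eqP.
  done.
have r0 : r = 0 by apply/polyP => i; rewrite coef0 rc0.
rewrite r0 addr0 lead_d in hdiv.
have [q' ->] := cancelX hdiv.
by rewrite eval2_map rmorphM hornerM -!eval2_map eval2_d huv mulr0.
Qed.

End Aux.

Unset Implicit Arguments.

Theorem mainTheorem6 (R : realType) :
  (forall p : R[i] * R[i], exact_period 4 p -> period4_curve p) /\
  (forall p : R[i] * R[i],
     zariski_closure (exact_period 4) p <-> period4_curve p).
Proof.
split; first exact: part1.
case=> u v; split.
- move=> H; rewrite /period4_curve /= -eval2_d; apply: H.
  by case=> x y hq; rewrite eval2_d; exact: (part1 hq).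
- by move=> hc f Hf; apply: part2.
Qed.
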